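(* Let $G$ be a finite, simple, connected graph. Then $res_{wt}(G)=3$ if and only if $G$ is a cycle of odd order or $G$ is a path of order at least three.
   Context: $d(x,y)$ is the shortest-path distance. A set $W\subseteq V(G)$ is a resolving set if for every two distinct vertices $y,z$ there is $x\in W$ with $d(y,x)\ne d(z,x)$. A set $W$ is a weak total resolving set (WTR-set) if $W$ is resolving and, for every $w\in W$ and every $x\in V(G)\setminus W$, there is $w'\in W\setminus\{w\}$ with $d(x,w')\ne d(w,w')$. The weak total resolving number $res_{wt}(G)$ is the minimum positive integer $r$ such that every set of $r$ vertices of $G$ is a WTR-set for $G$. *)

(* Defs.v *)
From mathcomp Require Import all_boot.
Set Implicit Arguments. Unset Strict Implicit. Unset Printing Implicit Defensive.

Definition simple_graph (T : finType) (e : rel T) : Prop :=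
  symmetric e /\ irreflexive e.

Definition connected_graph (T : finType) (e : rel T) : Prop :=
  forall x y : T, connect e x y.

Definition walk_of_len (T : finType) (e : rel T) (k : nat) (x y : T) : bool :=
  [exists p : k.-tuple T, path e x p && (last x p == y)].

(* shortest-path distance: least k < #|T| admitting a walk of length k
   (in a connected graph such k always exists, and a shortest walk is a path) *)
Definition dist (T : finType) (e : rel T) (x y : T) : nat :=
  find (fun k => walk_of_len e k x y) (iota 0 #|T|).

Definition resolving (T : finType) (e : rel T) (W : {set T}) : Prop :=
  forall y z : T, y != z -> exists2 x, x \in W & dist e y x != dist e z x.

Definition wtr_set (T : finType) (e : rel T) (W : {set T}) : Prop :=
  resolving e W /\
  forall w x, w \in W -> x \notin W ->
    exists2 w', w' \in W :\ w & dist e x w' != dist e w w'.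

Definition all_r_sets_wtr (T : finType) (e : rel T) (r : nat) : Prop :=
  forall W : {set T}, #|W| = r -> wtr_set e W.

Definition res_wt_is (T : finType) (e : rel T) (r : nat) : Prop :=
  0 < r /\ all_r_sets_wtr e r /\
  forall r', 0 < r' < r -> ~ all_r_sets_wtr e r'.

Definition is_cycle_graph (T : finType) (e : rel T) (n : nat) : Prop :=
  3 <= n /\ exists f : 'I_n -> T, bijective f /\
    forall i j : 'I_n, e (f i) (f j) = ((j == (i + 1) %% n :> nat) || (i == (j + 1) %% n :> nat)).

Definition is_path_graph (T : finType) (e : rel T) (n : nat) : Prop :=
  exists f : 'I_n -> T, bijective f /\
    forall i j : 'I_n, e (f i) (f j) = ((j == i.+1 :> nat) || (i == j.+1 :> nat)).

(* Main.v *)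
Require Import Defs.
From mathcomp Require Import all_boot zify.
Set Implicit Arguments. Unset Strict Implicit. Unset Printing Implicit Defensive.


Lemma find_iota_char (p : pred nat) N k :
  p k -> (forall j, j < k -> ~~ p j) -> k < N -> find p (iota 0 N) = k.
Proof.
move=> pk before kN.
have Hhas : has p (iota 0 N) by apply/hasP; exists k => //; rewrite mem_iota.
have iN : find p (iota 0 N) < N by rewrite -{2}(size_iota 0 N) -has_find.
have pi : p (find p (iota 0 N)) by have := nth_find 0 Hhas; rewrite nth_iota.
case: (ltngtP (find p (iota 0 N)) k) => // [ik | ki].
- by have := before _ ik; rewrite pi.
- by have := before_find 0 ki; rewrite nth_iota // add0n pk.
Qed.

Section Dist.
Variables (T : finType) (e : rel T).

Lemma walkP k x y : reflect (exists s : seq T, [/\ size s = k, path e x s & last x s = y])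
  (walk_of_len e k x y).
Proof.
apply: (iffP existsP) => [[p /andP[Hp /eqP Hl]] | [s [Hs Hp Hl]]].
  by exists (val p); rewrite size_tuple.
have Hs' : size s == k by apply/eqP.
by exists (Tuple Hs') => /=; rewrite Hp Hl eqxx.
Qed.

Lemma dist_char x y k : walk_of_len e k x y -> (forall j, j < k -> ~~ walk_of_len e j x y) ->
  k < #|T| -> dist e x y = k.
Proof. exact: find_iota_char. Qed.

Lemma uniq_card (s : seq T) : uniq s -> size s <= #|T|.
Proof. by move/card_uniqP <-; apply: max_card. Qed.

Lemma card2T (x y : T) : x != y -> 1 < #|T|.
Proof. by move=> H; have := uniq_card (s := [:: x; y]); rewrite /= inE H; apply. Qed.

Lemma dist_walk x y : connect e x y -> dist e x y < #|T| /\ walk_of_len e (dist e x y) x y.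
Proof.
move=> /connectP [p Hp ->]; case: (shortenP Hp) => p' Hp' Hu _.
have Hk : size p' < #|T| by have := uniq_card Hu.
have Hw : walk_of_len e (size p') x (last x p') by apply/walkP; exists p'.
have Hhas : has (fun k => walk_of_len e k x (last x p')) (iota 0 #|T|).
  by apply/hasP; exists (size p') => //; rewrite mem_iota.
split; first by rewrite /dist -{2}(size_iota 0 #|T|) -has_find.
by have := nth_find 0 Hhas; rewrite nth_iota // -{2}(size_iota 0 #|T|) -has_find.
Qed.

Lemma dist0 x : dist e x x = 0.
Proof.
apply: dist_char => //; last by apply/card_gt0P; exists x.
by apply/walkP; exists [::].
Qed.

Hypothesis conn : connected_graph e.
Hypothesis esym : symmetric e.
Hypothesis eirr : irreflexive e.

Lemma dist_eq0 x y : dist e x y = 0 -> x = y.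
Proof.
move=> H; case: (dist_walk (conn x y)) => _; rewrite H => /walkP [s [Hs _ Hl]].
by case: s Hs Hl.
Qed.

Lemma dist1 x y : e x y -> dist e x y = 1.
Proof.
move=> exy; have nxy : x != y by apply: contraTneq exy => ->; rewrite eirr.
apply: dist_char.
- by apply/walkP; exists [:: y]; rewrite /= exy.
- case=> // _; apply/negP => /walkP [s [Hs _ Hy]].
  by case: s Hs Hy => // _ /= Hy; rewrite Hy eqxx in nxy.
- exact: card2T nxy.
Qed.

Lemma dist2 x y v : x != y -> ~~ e x y -> e x v -> e v y -> dist e x y = 2.
Proof.
move=> nxy nexy exv evy.
have nxv : x != v by apply: contraTneq exv => ->; rewrite eirr.
have nyv : y != v by apply: contraTneq evy => ->; rewrite eirr.
apply: dist_char.
- by apply/walkP; exists [:: v; y]; rewrite /= exv evy.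
- case=> [_|[_|//]]; apply/negP => /walkP [s [Hs Hp Hl]].
  + by case: s Hs Hp Hl => // _ _ /= Hy; rewrite Hy eqxx in nxy.
  + by case: s Hs Hp Hl => // a [] //= _; rewrite andbT => H Ha; rewrite -Ha H in nexy.
- have := uniq_card (s := [:: x; y; v]); rewrite /= !inE negb_or nxy nxv nyv; apply => //.
Qed.

Lemma dist_nb a b v : a != b -> e v a -> e v b -> dist e a b = if e a b then 1 else 2.
Proof.
move=> nab eva evb; case: ifP => H; first exact: dist1.
by apply: (dist2 (v := v)) => //; rewrite ?H // esym.
Qed.

Lemma dist_D (y : T) (D : T -> nat) :
  (forall x z, e x z -> D x <= D z + 1) ->
  (forall x, D x = 0 -> x = y) -> D y = 0 ->
  (forall x k, D x = k.+1 -> exists2 z, e x z & D z = k) ->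
  (forall x, D x < #|T|) -> forall x, dist e x y = D x.
Proof.
move=> Hle H0 Hy Hs Hlt x.
have low : forall s x, path e x s -> last x s = y -> D x <= size s.
  elim=> [|z s IH] x0 /=; first by move=> _ ->; rewrite Hy.
  move=> /andP [ez Hp] Hl; have := IH _ Hp Hl; have := Hle _ _ ez; lia.
apply: dist_char => //.
- have: forall k x, D x = k -> walk_of_len e k x y; last by apply.
  elim=> [|k IH] x0 Hx0; first by apply/walkP; exists [::]; rewrite (H0 _ Hx0).
  case: (Hs _ _ Hx0) => z ez Dz; case/walkP: (IH _ Dz) => s [Hsz Hp Hl].
  by apply/walkP; exists (z :: s); rewrite /= ez Hp Hsz.
- move=> j Hj; apply/negP => /walkP [s [Hsz Hp Hl]]; have := low _ _ Hp Hl; lia.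
Qed.

End Dist.


Section Res.
Variables (T : finType) (e : rel T).
Hypothesis conn : connected_graph e.
Hypothesis esym : symmetric e.
Hypothesis eirr : irreflexive e.

Definition pair_res := forall a b y z : T, a != b -> y != z ->
  (dist e y a != dist e z a) || (dist e y b != dist e z b).

Lemma dist_neq0 x y : x != y -> dist e y x != 0.
Proof. move=> H; apply/eqP => /(dist_eq0 conn) Hy; by rewrite Hy eqxx in H. Qed.

Lemma pair_all3 : pair_res -> all_r_sets_wtr e 3.
Proof.
move=> Hp W HW; split.
- move=> y z nyz.
  have : 1 < #|W| by rewrite HW.
  case/card_gt1P => a [b [aW bW nab]].
  by case/orP: (Hp a b y z nab nyz) => H; [exists a | exists b].
- move=> w x wW xW.
  have : #|W :\ w| = 2 by move: HW; rewrite (cardsD1 w) wW; case.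
  move=> H2; have : 1 < #|W :\ w| by rewrite H2.
  case/card_gt1P => a [b [aW bW nab]].
  have nxw : x != w by apply: contraNneq xW => ->.
  by case/orP: (Hp a b x w nab nxw) => H; [exists a | exists b].
Qed.

Lemma card3 (a b c : T) : a != b -> a != c -> b != c -> #|[set a; b; c]| = 3.
Proof.
move=> nab nac nbc.
by rewrite -setUA cardsU1 cards2 !inE negb_or nab nac nbc.
Qed.

Lemma all3_pair : all_r_sets_wtr e 3 -> pair_res.
Proof.
move=> H3 a b y z nab nyz.
case: (eqVneq y a) => [Hy|nya].
  by subst y; apply/orP; left; rewrite dist0 eq_sym; apply: dist_neq0.
case: (eqVneq z a) => [Hz|nza].
  by subst z; apply/orP; left; rewrite dist0; apply: dist_neq0; rewrite eq_sym.
case: (eqVneq y b) => [Hy|nyb].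
  by subst y; apply/orP; right; rewrite dist0 eq_sym; apply: dist_neq0.
case: (eqVneq z b) => [Hz|nzb].
  by subst z; apply/orP; right; rewrite dist0; apply: dist_neq0; rewrite eq_sym.
have [_ H] := H3 [set z; a; b] (card3 nza nzb nab).
have zW : z \in [set z; a; b] by rewrite !inE eqxx.
have yW : y \notin [set z; a; b] by rewrite !inE (negbTE nyz) (negbTE nya) (negbTE nyb).
case: (H z y zW yW) => w'; rewrite !inE => /andP [nw' Hin] Hd.
have: (w' == a) || (w' == b).
  by move: Hin nw'; case: (w' == z); case: (w' == a); case: (w' == b).
by case/orP => /eqP Hw'; subst w'; rewrite Hd ?orbT.
Qed.

Lemma not_all1 : 1 < #|T| -> ~ all_r_sets_wtr e 1.
Proof.
case/card_gt1P => w [x [_ _ nwx]] H.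
have [_ H2] := H [set w] (cards1 w).
have := H2 w x (set11 w); rewrite inE eq_sym nwx => /(_ isT) [w'].
by rewrite !inE andNb.
Qed.

Lemma not_all2 u v w : u != w -> e v u -> e v w -> ~ all_r_sets_wtr e 2.
Proof.
move=> nuw evu evw H.
have nuv : u != v by apply: contraTneq evu => ->; rewrite eirr.
have nwv : w != v by apply: contraTneq evw => ->; rewrite eirr.
have Hc : #|[set u; v]| = 2 by rewrite cards2 nuv.
have [_ H2] := H [set u; v] Hc.
have uW : u \in [set u; v] by rewrite !inE eqxx.
have := H2 u w uW; rewrite !inE negb_or eq_sym nuw nwv => /(_ isT) [w'].
rewrite !inE => /andP [nw' /orP [/eqP Hw'|/eqP ->]]; first by rewrite Hw' eqxx in nw'.
by rewrite !(dist1 eirr) // esym.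
Qed.

Lemma small_all (r : nat) : #|T| <= r -> all_r_sets_wtr e r.
Proof.
move=> Hr W HW; split.
- move=> y z nyz; exists y; last by rewrite dist0 eq_sym dist_neq0.
  apply: contraT => yW.
  have : #|W| < #|T|.
    rewrite -(cardsC W); have : 0 < #|~: W| by apply/card_gt0P; exists y; rewrite inE.
    lia.
  lia.
- move=> w x _ xW; exfalso.
  have : #|W| < #|T|.
    rewrite -(cardsC W); have : 0 < #|~: W| by apply/card_gt0P; exists x; rewrite inE.
    lia.
  lia.
Qed.

Lemma deg2 : pair_res -> forall v a b c, e v a -> e v b -> e v c -> [|| a == b, a == c | b == c].
Proof.
move=> Hp v a b c eva evb evc.
case: (eqVneq a b) => [_|nab]; first by rewrite ?eqxx ?orbT.
case: (eqVneq a c) => [_|nac]; first by rewrite ?eqxx ?orbT.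
case: (eqVneq b c) => [_|nbc]; first by rewrite ?eqxx ?orbT.
exfalso.
have nva : v != a by apply: contraTneq eva => ->; rewrite eirr.
have nvb : v != b by apply: contraTneq evb => ->; rewrite eirr.
have nvc : v != c by apply: contraTneq evc => ->; rewrite eirr.
have d1 : forall u, e v u -> dist e u v = 1 by move=> u H; apply: (dist1 eirr); rewrite esym.
have := Hp v a b c nva nbc; rewrite !d1 // eqxx /=.
rewrite !(dist_nb esym eirr (v := v)) // 1?eq_sym //.
have := Hp v b a c nvb nac; rewrite !d1 // eqxx /=.
rewrite !(dist_nb esym eirr (v := v)) // 1?eq_sym //.
have := Hp v c a b nvc nab; rewrite !d1 // eqxx /=.
rewrite !(dist_nb esym eirr (v := v)) // 1?eq_sym //.
rewrite (esym b a) (esym c a) (esym c b).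
by case: (e a b); case: (e a c); case: (e b c).
Qed.

End Res.


Lemma modS (n i : nat) : i < n -> (i+1) %% n = if i.+1 == n then 0 else i.+1.
Proof. move=> H; case: eqP => [<-|Hn]; first by rewrite addn1 modnn.
rewrite modn_small; lia. Qed.

Lemma modP (n i : nat) : i < n -> (i + n.-1) %% n = if i == 0 then n.-1 else i.-1.
Proof.
move=> H; case: eqP => [->|Hn]; first by rewrite add0n modn_small; lia.
have -> : i + n.-1 = i.-1 + n by lia.
by rewrite modnDr modn_small; lia.
Qed.

Definition cd n (i j : nat) := minn ((i - j) + (j - i)) (n - ((i - j) + (j - i))).
Lemma cdE n i j : j <= i -> cd n i j = minn (i - j) (n - (i - j)).
Proof. move=> *; rewrite /cd; congr minn; lia. Qed.
Lemma cdE' n i j : i <= j -> cd n i j = minn (j - i) (n - (j - i)).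
Proof. move=> *; rewrite /cd; congr minn; lia. Qed.
Lemma B n x j k : 3 <= n -> x < n -> j < n -> cd n x j = k.+1 ->
 cd n (if x.+1 == n then 0 else x.+1) j = k \/ cd n (if x == 0 then n.-1 else x.-1) j = k.
Proof. move=> n3 xn jn.
case: (ltngtP x j) => Hxj.
- rewrite (@cdE' _ _ _ (ltnW Hxj)) => Hk.
  case: (leqP (2*(j-x)) n) => Hd.
  + left; rewrite ifF; last by apply/eqP; lia.
    rewrite cdE' //; lia.
  + right; case: (x =P 0) => H0.
    * rewrite cdE; last by lia. lia.
    * rewrite cdE'; last by lia. lia.
- rewrite (@cdE _ _ _ (ltnW Hxj)) => Hk.
  case: (leqP (2*(x-j)) n) => Hd.
  + right; rewrite ifF; last by apply/eqP; lia.
    rewrite cdE; last by lia. lia.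
  + left; case: (x.+1 =P n) => H0.
    * rewrite cdE'; last by lia. lia.
    * rewrite cdE; last by lia. lia.
- rewrite Hxj /cd !subnn; lia.
Qed.
Lemma cd_eq n p q i : p < n -> q < n -> i < n -> cd n p i = cd n q i ->
  p = q \/ p + q = 2 * i \/ p + q = 2 * i + n \/ p + q + n = 2 * i.
Proof.
move=> pn qn i_n.
case: (leqP i p) => Hp; [rewrite (@cdE _ _ _ Hp) | rewrite (@cdE' _ _ _ (ltnW Hp))];
case: (leqP i q) => Hq; try rewrite (@cdE _ _ _ Hq); try rewrite (@cdE' _ _ _ (ltnW Hq)); lia.
Qed.
Section Model.
Variables (T : finType) (e : rel T).

Lemma path_dist n (f : 'I_n -> T) : bijective f ->
  (forall i j : 'I_n, e (f i) (f j) = (j == i.+1 :> nat) || (i == j.+1 :> nat)) ->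
  forall i j : 'I_n, dist e (f i) (f j) = (i - j) + (j - i).
Proof.
move=> fb Hf i j; have := bij_eq_card fb; rewrite card_ord => HT.
case: fb => g fK gK.
have -> : (i - j) + (j - i) = (g (f i) - j) + (j - g (f i)) by rewrite fK.
apply: (dist_D (D := fun x => (g x - j) + (j - g x))).
- move=> x z; rewrite -{1}(gK x) -{1}(gK z) Hf; lia.
- move=> x Hx; rewrite -(gK x); congr f; apply: val_inj => /=; lia.
- by rewrite fK; lia.
- move=> x k Hk; case: (ltnP (g x) j) => Hlt.
  + have Hs : (g x).+1 < n by have := ltn_ord j; lia.
    exists (f (Ordinal Hs)); last by rewrite fK /=; lia.
    by rewrite -{1}(gK x) Hf /= eqxx.
  + have Hs : (g x).-1 < n by have := ltn_ord (g x); lia.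
    exists (f (Ordinal Hs)); last by rewrite fK /=; lia.
    rewrite -{1}(gK x) Hf /=; lia.
- move=> x; rewrite -HT; have := ltn_ord (g x); have := ltn_ord j; lia.
Qed.

Lemma cycle_dist n (f : 'I_n -> T) : 3 <= n -> bijective f ->
  (forall i j : 'I_n, e (f i) (f j) = ((j == (i + 1) %% n :> nat) || (i == (j + 1) %% n :> nat))) ->
  forall i j : 'I_n, dist e (f i) (f j) = cd n i j.
Proof.
move=> n3 fb Hf i j; have := bij_eq_card fb; rewrite card_ord => HT.
case: fb => g fK gK.
have -> : cd n i j = cd n (g (f i)) j by rewrite fK.
have n0 : 0 < n by lia.
apply: (dist_D (D := fun x => cd n (g x) j)); rewrite /cd.
- move=> x z; rewrite -{1}(gK x) -{1}(gK z) Hf !modS //.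
  have := ltn_ord (g x); have := ltn_ord (g z); have := ltn_ord j.
  case: ((g x).+1 =P n); case: ((g z).+1 =P n); lia.
- move=> x Hx; rewrite -(gK x); congr f; apply: val_inj => /=.
  have := ltn_ord (g x); have := ltn_ord j; lia.
- by rewrite fK; lia.
- move=> x k Hk.
  have Hs : (g x + 1) %% n < n by rewrite ltn_pmod.
  have Hp : (g x + n.-1) %% n < n by rewrite ltn_pmod.
  have Es : e x (f (Ordinal Hs)) by rewrite -{1}(gK x) Hf /= eqxx.
  have Ep : e x (f (Ordinal Hp)).
    have gxn := ltn_ord (g x).
    rewrite -{1}(gK x) Hf /= modP //; apply/orP; right.
    case: ((g x : nat) =P 0) => H0.
      by rewrite H0 /= addn1 prednK // modnn.
    by rewrite addn1 prednK ?modn_small //; lia.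
  have := B n3 (ltn_ord (g x)) (ltn_ord j) Hk.
  rewrite -modS // -modP //.
  by case=> H; [exists (f (Ordinal Hs)) | exists (f (Ordinal Hp))]; rewrite // fK.
- move=> x; rewrite -HT; have := ltn_ord (g x); have := ltn_ord j; lia.
Qed.

End Model.

Lemma path_arith (i j p q : nat) : i != j -> p != q ->
  ((p - i) + (i - p) != (q - i) + (i - q)) || ((p - j) + (j - p) != (q - j) + (j - q)).
Proof.
move=> nij npq; case: eqP => H1 //; case: eqP => H2; rewrite ?orbT //.
move: nij npq => /eqP nij /eqP npq; lia.
Qed.

Lemma cycle_arith n (i j p q : nat) : odd n -> i < n -> j < n -> p < n -> q < n ->
  i != j -> p != q -> (cd n p i != cd n q i) || (cd n p j != cd n q j).
Proof.
move=> On *; have := odd_double_half n; rewrite On /= => Hn.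
case: eqP => [/cd_eq H1|]; last by [].
case: eqP => [/cd_eq H2|]; last by rewrite orbT.
have := H1 _ _ _; have := H2 _ _ _. lia.
Qed.
Lemma cycle_even n : 3 <= n -> ~~ odd n ->
  (cd n 1 0 == cd n n.-1 0) && (cd n 1 n./2 == cd n n.-1 n./2).
Proof.
move=> n3 En; have := odd_double_half n; rewrite (negbTE En) /= add0n => Hn.
rewrite /cd; apply/andP; split; apply/eqP; lia.
Qed.


Section Struct.
Variables (T : finType) (e : rel T).
Hypothesis conn : connected_graph e.
Hypothesis esym : symmetric e.
Hypothesis eirr : irreflexive e.
Hypothesis dg : forall v a b c, e v a -> e v b -> e v c -> [|| a == b, a == c | b == c].
Variables (s t : T).
Hypothesis est : e s t.
Hypothesis Hcase : (forall z, e s z -> z = t) \/ (forall v, exists a b, [/\ a != b, e v a & e v b]).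

Definition step (p : T * T) := (p.2, odflt p.1 [pick z | e p.2 z && (z != p.1)]).
Definition xs k := (iter k step (s, t)).1.

Lemma xs0 : xs 0 = s. Proof. by []. Qed.
Lemma xs1 : xs 1 = t. Proof. by []. Qed.
Lemma xsSS k : xs k.+2 = odflt (xs k) [pick z | e (xs k.+1) z && (z != xs k)].
Proof. by []. Qed.
Arguments xs : simpl never.

Lemma closed_all (P : pred T) : (forall u v, P u -> e u v -> P v) -> P s -> forall v, P v.
Proof.
move=> Hc Ps v; case/connectP: (conn s v) => p Hp ->.
elim: p s Ps Hp => [|z p IH] u Pu //= /andP [euz Hp].
exact: IH (Hc _ _ Pu euz) Hp.
Qed.

Lemma closed_card K : (forall i v, i <= K -> e (xs i) v -> exists2 j, j <= K & v = xs j) ->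
  #|T| <= K.+1.
Proof.
move=> Hc.
have Hall : forall v, [exists i : 'I_K.+1, v == xs i].
  apply: closed_all; last by apply/existsP; exists ord0; rewrite xs0.
  move=> u v /existsP [i /eqP ->] euv.
  case: (Hc i v (ltn_ord i) euv) => j jK ->.
  by apply/existsP; exists (Ordinal (jK : j < K.+1)).
have : #|T| <= #|[set xs (val i) | i in 'I_K.+1]|.
  apply/subset_leq_card/subsetP => v _; case/existsP: (Hall v) => i /eqP ->.
  by apply/imsetP; exists i.
move=> H; apply: leq_trans H _; have := leq_imset_card (fun i : 'I_K.+1 => xs (val i)) 'I_K.+1.
by rewrite card_ord.
Qed.

Definition Inv k := (forall i j, i <= k -> j <= k -> xs i = xs j -> i = j) /\
                    (forall i, i < k -> e (xs i) (xs i.+1)).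

Lemma mid k i v : Inv k -> 0 < i -> i < k -> e (xs i) v -> v = xs i.-1 \/ v = xs i.+1.
Proof.
move=> [Hd He] i0 ik eiv.
have e1 : e (xs i) (xs i.-1) by rewrite esym; have := He i.-1; rewrite prednK //; apply; lia.
have e2 : e (xs i) (xs i.+1) by apply: He.
have n12 : xs i.-1 != xs i.+1 by apply/eqP => /Hd; lia.
case/or3P: (dg e1 e2 eiv) => /eqP H; [by rewrite H eqxx in n12 | by left | by right].
Qed.

Lemma inv_all k : k < #|T| -> Inv k.
Proof.
have nst : s != t by apply: contraTneq est => ->; rewrite eirr.
elim: k => [|k IH] kT.
  by split=> [i j|i]; rewrite ?leqn0 => // /eqP -> /eqP ->.
case: k IH kT => [|k] IH kT.
  split=> [i j|i]; last by rewrite ltnS leqn0 => /eqP ->; rewrite xs0 xs1.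
  case: i => [|[|//]]; case: j => [|[|//]] //= _ _; rewrite xs0 xs1 => H.
  - by rewrite H eqxx in nst.
  - by rewrite H eqxx in nst.
have [Hd He] := IH (ltnW kT).
have Iv : Inv k.+1 by split.
have closing : (forall i v, i <= k.+1 -> e (xs i) v -> exists2 j, j <= k.+1 & v = xs j) -> False.
  by move=> Hc; have := closed_card Hc; lia.
move: (xsSS k); case: pickP => [z /andP [ez nz] | Hnone] /= Hx.
- have znew : forall j, j <= k.+1 -> z != xs j.
    move=> j jk; apply/eqP => Hzj.
    case: (ltngtP j k.+1) => Hj; last by rewrite Hzj Hj eirr in ez.
    + case: (ltngtP j k) => Hj'; last by rewrite Hzj Hj' eqxx in nz.
      * case: j Hj Hj' Hzj jk => [|j] Hj Hj' Hzj jk.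
        -
          rewrite xs0 in Hzj; rewrite Hzj in ez nz.
          case: Hcase => [Hp | Hc].
          + have := Hp _ (etrans (esym _ _) ez); rewrite -xs1 => /Hd; lia.
          + apply: closing => i v ik eiv.
            case: (ltngtP i k.+1) => Hi.
            * case: i ik eiv Hi => [|i] ik eiv Hi.
              - rewrite xs0 in eiv.
                have e1 : e s (xs 1) by rewrite xs1.
                have e2 : e s (xs k.+1) by rewrite esym.
                have n12 : xs 1 != xs k.+1 by apply/eqP => /Hd; lia.
                case/or3P: (dg e1 e2 eiv) => /eqP H.
                + by rewrite H eqxx in n12.
                + by exists 1.
                + by exists k.+1.
              - case: (mid Iv _ Hi eiv) => // ->; [exists i | exists i.+2]; try done; lia.
            * lia.
            * subst i.
              have e1 : e (xs k.+1) (xs k) by rewrite esym; apply: He.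
              have n12 : xs k != xs 0 by apply/eqP => /Hd; lia.
              rewrite -xs0 in ez.
              case/or3P: (dg e1 ez eiv) => /eqP H.
              - by rewrite H eqxx in n12.
              - by exists k.
              - by exists 0.
        - rewrite Hzj esym in ez.
          have := mid Iv (isT : 0 < j.+1) Hj ez.
          by case=> /Hd; lia.
      * lia.
    + lia.
  split.
  + move=> i j Hi Hj.
    have [Ei|Li] : i = k.+2 \/ i <= k.+1 by lia.
    * have [Ej|Lj] : j = k.+2 \/ j <= k.+1 by lia.
        by rewrite Ei Ej.
      by rewrite Ei Hx => Hzj; have := znew j Lj; rewrite Hzj eqxx.
    * have [Ej|Lj] : j = k.+2 \/ j <= k.+1 by lia.
        by rewrite Ej Hx => Hzi; have := znew i Li; rewrite -Hzi eqxx.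
      exact: Hd.
  + move=> i Hi; have [->|Li] : i = k.+1 \/ i < k.+1 by lia.
      by rewrite Hx.
    exact: He.
- exfalso; case: Hcase => [Hp | Hc].
  + apply: closing => i v ik eiv.
    case: (ltngtP i k.+1) => Hi.
    * case: i ik eiv Hi => [|i] ik eiv Hi.
      - by rewrite xs0 in eiv; exists 1; rewrite // xs1 (Hp _ eiv).
      - case: (mid Iv _ Hi eiv) => // ->; [exists i | exists i.+2]; try done; lia.
    * lia.
    * subst i; exists k => //; have := Hnone v; rewrite eiv /= => /negbFE /eqP //.
  + case: (Hc (xs k.+1)) => a [b [nab ea eb]].
    have := Hnone a; have := Hnone b; rewrite ea eb /= => /negbFE /eqP Hb /negbFE /eqP Ha.
    by rewrite Ha Hb eqxx in nab.
Qed.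

Hypothesis T3 : 3 <= #|T|.

Lemma invN : Inv #|T|.-1.
Proof. apply: inv_all; lia. Qed.

Lemma xs_bij : bijective (fun i : 'I_#|T| => xs i).
Proof.
apply: inj_card_bij; last by rewrite card_ord.
move=> i j H; apply: val_inj; case: invN => Hd _; apply: Hd H.
- by have := ltn_ord i; lia.
- by have := ltn_ord j; lia.
Qed.

Lemma xs_surj v : exists2 m, m < #|T| & v = xs m.
Proof. by case: xs_bij => g _ gK; exists (g v) => //; rewrite gK. Qed.

Lemma xs_dist i j : i < #|T| -> j < #|T| -> xs i = xs j -> i = j.
Proof. move=> Hi Hj; case: invN => Hd _; apply: Hd; lia. Qed.

Lemma xs_mid i v : 0 < i -> i < #|T|.-1 -> e (xs i) v -> v = xs i.-1 \/ v = xs i.+1.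
Proof. move=> *; exact: (mid invN). Qed.

Lemma xs_edge i : i < #|T|.-1 -> e (xs i) (xs i.+1).
Proof. by case: invN => _ He; apply: He. Qed.

Section PathCase.
Hypothesis Hp : forall z, e s z -> z = t.

Lemma edge_path_aux i j : i < j -> j < #|T| -> e (xs i) (xs j) -> j = i.+1.
Proof.
move=> ij jN eij; case: i ij eij => [|i] ij eij.
- by rewrite xs0 in eij; have := Hp eij; rewrite -xs1 => /xs_dist; apply; lia.
- case: (xs_mid (isT : 0 < i.+1) _ eij); first by lia.
  + by move/xs_dist; lia.
  + by move/xs_dist; lia.
Qed.

Lemma edge_path (i j : 'I_#|T|) : e (xs i) (xs j) = (j == i.+1 :> nat) || (i == j.+1 :> nat).
Proof.
apply/idP/idP => [H | /orP [/eqP H | /eqP H]].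
- case: (ltngtP i j) => Hij.
  + by rewrite (edge_path_aux Hij (ltn_ord j) H) eqxx.
  + by rewrite esym in H; rewrite (edge_path_aux Hij (ltn_ord i) H) eqxx orbT.
  + by have := ltn_ord j; move: H; rewrite (val_inj Hij) eirr.
- by rewrite H; apply: xs_edge; have := ltn_ord j; lia.
- by rewrite esym H; apply: xs_edge; have := ltn_ord i; lia.
Qed.
End PathCase.

Section CycleCase.
Hypothesis Hc : forall v, exists a b, [/\ a != b, e v a & e v b].

Lemma close_cycle : e (xs #|T|.-1) s.
Proof.
have nb : forall v, e (xs #|T|.-1) v -> v = xs 0 \/ v = xs #|T|.-2.
  move=> v ev; case: (xs_surj v) => m mN Hm; subst v.
  case: m mN ev => [|m] mN ev; first by left.
  case: (ltngtP m.+1 #|T|.-1) => Hm.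
  - rewrite esym in ev; case: (xs_mid (isT : 0 < m.+1) Hm ev) => /xs_dist H.
    + lia.
    + by right; have -> : #|T|.-2 = m.+1 by lia.
  - lia.
  - by rewrite Hm eirr in ev.
case: (Hc (xs #|T|.-1)) => a [b [nab ea eb]].
case: (nb a ea) => Ha; case: (nb b eb) => Hb; rewrite -xs0.
- by rewrite -Ha in Hb; rewrite Hb eqxx in nab.
- by rewrite -Ha.
- by rewrite -Hb.
- by rewrite -Ha in Hb; rewrite Hb eqxx in nab.
Qed.

Lemma edge_cycle_aux i j : i < j -> j < #|T| -> e (xs i) (xs j) ->
  j = i.+1 \/ (i = 0 /\ j = #|T|.-1).
Proof.
move=> ij jN eij; case: i ij eij => [|i] ij eij.
- rewrite xs0 in eij.
  have e1 : e s (xs 1) by rewrite xs1.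
  have e2 : e s (xs #|T|.-1) by rewrite esym close_cycle.
  have n12 : xs 1 != xs #|T|.-1 by apply/eqP => /xs_dist; lia.
  case/or3P: (dg e1 e2 eij) => /eqP H.
  + by rewrite H eqxx in n12.
  + by move/xs_dist: H; lia.
  + by move/xs_dist: H; lia.
- case: (xs_mid (isT : 0 < i.+1) _ eij); first by lia.
  + by move/xs_dist; lia.
  + by move/xs_dist; lia.
Qed.

Lemma edge_cycle (i j : 'I_#|T|) :
  e (xs i) (xs j) = (j == (i + 1) %% #|T| :> nat) || (i == (j + 1) %% #|T| :> nat).
Proof.
have iN := ltn_ord i; have jN := ltn_ord j.
rewrite !modS //.
apply/idP/idP => [H | H].
- have : ((j:nat) = i.+1 \/ (i:nat) = j.+1) \/ (((i:nat) = 0 /\ (j:nat) = #|T|.-1) \/ ((j:nat) = 0 /\ (i:nat) = #|T|.-1)).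
    case: (ltngtP i j) => Hij.
    + by case: (edge_cycle_aux Hij jN H); auto.
    + by rewrite esym in H; case: (edge_cycle_aux Hij iN H); auto.
    + by move: H; rewrite (val_inj Hij) eirr.
  case: ((i : nat).+1 =P #|T|); case: ((j : nat).+1 =P #|T|); lia.
- have : ((j:nat) = i.+1 \/ (i:nat) = j.+1) \/ (((i:nat) = 0 /\ (j:nat) = #|T|.-1) \/ ((j:nat) = 0 /\ (i:nat) = #|T|.-1)).
    by move: H; case: ((i : nat).+1 =P #|T|); case: ((j : nat).+1 =P #|T|); lia.
  case=> [[H1|H1]|[[H1 H2]|[H1 H2]]]; rewrite ?H1 ?H2.
  + by apply: xs_edge; lia.
  + by rewrite esym; apply: xs_edge; lia.
  + by rewrite xs0 esym close_cycle.
  + by rewrite xs0 close_cycle.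
Qed.
End CycleCase.

Lemma struct_path : (forall z, e s z -> z = t) -> is_path_graph e #|T|.
Proof. move=> Hp; exists (fun i : 'I_#|T| => xs i); split; [exact: xs_bij | exact: edge_path]. Qed.

Lemma struct_cycle : (forall v, exists a b, [/\ a != b, e v a & e v b]) -> is_cycle_graph e #|T|.
Proof. move=> Hc; split => //; exists (fun i : 'I_#|T| => xs i); split; [exact: xs_bij | exact: edge_cycle]. Qed.

End Struct.



Section Final.
Variables (T : finType) (e : rel T).
Hypothesis conn : connected_graph e.
Hypothesis esym : symmetric e.
Hypothesis eirr : irreflexive e.

Lemma inj_nat n (f : 'I_n -> T) (g : T -> 'I_n) : cancel g f -> forall a b, a != b -> (g a : nat) != g b.
Proof.
move=> gK a b nab; apply/eqP => H; move/eqP: nab; apply; rewrite -(gK a) -(gK b); congr f.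
exact: val_inj.
Qed.

Lemma path_pair n : is_path_graph e n -> pair_res e.
Proof.
case=> f [fb Hf]; have Hd := path_dist fb Hf.
case: fb => g fK gK a b y z nab nyz.
rewrite -(gK a) -(gK b) -(gK y) -(gK z) !Hd.
exact: path_arith (inj_nat gK nab) (inj_nat gK nyz).
Qed.

Lemma odd_cycle_pair n : is_cycle_graph e n -> odd n -> pair_res e.
Proof.
case=> n3 [f [fb Hf]] On; have Hd := cycle_dist n3 fb Hf.
case: fb => g fK gK a b y z nab nyz.
rewrite -(gK a) -(gK b) -(gK y) -(gK z) !Hd.
exact: cycle_arith On (ltn_ord _) (ltn_ord _) (ltn_ord _) (ltn_ord _) (inj_nat gK nab) (inj_nat gK nyz).
Qed.

Lemma even_cycle_not_pair n : is_cycle_graph e n -> ~~ odd n -> ~ pair_res e.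
Proof.
case=> n3 [f [fb Hf]] En Hp; have Hd := cycle_dist n3 fb Hf.
have finj := bij_inj fb.
have h0 : 0 < n by lia.
have h1 : 1 < n by lia.
have hm : n./2 < n by lia.
have hl : n.-1 < n by lia.
have nab : f (Ordinal h0) != f (Ordinal hm).
  by apply/eqP => /finj /(congr1 val) /=; lia.
have nyz : f (Ordinal h1) != f (Ordinal hl).
  by apply/eqP => /finj /(congr1 val) /=; lia.
have := Hp _ _ _ _ nab nyz; rewrite !Hd /=.
by case/andP: (cycle_even n3 En) => /eqP E1 /eqP E2; rewrite E1 E2 !eqxx.
Qed.

Lemma nbr : 1 < #|T| -> forall v, exists a, e v a.
Proof.
case/card_gt1P => x [y [_ _ nxy]] v.
have [w nwv] : exists w, w != v.
  by case: (eqVneq x v) => [Hx|Hx]; [exists y; rewrite -Hx eq_sym | exists x].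
case/connectP: (conn v w) => [[|a p]] /=.
- by move=> _ Hw; rewrite Hw eqxx in nwv.
- by case/andP => H _ _; exists a.
Qed.

End Final.

Theorem theorem6 (T : finType) (e : rel T) :
  simple_graph e -> connected_graph e ->
  (res_wt_is e 3 <->
   (exists n, odd n /\ is_cycle_graph e n) \/
   (exists n, 3 <= n /\ is_path_graph e n)).
Proof.
move=> [esym eirr] conn; split.
- move=> [_ [H3 Hmin]].
  have T3 : 3 <= #|T|.
    by case: (leqP 3 #|T|) => // HT; exfalso; apply: (Hmin 2) => //; apply: (small_all conn); lia.
  have Hpr := all3_pair conn H3.
  have dg := deg2 esym eirr Hpr.
  have [s [t [est Hcase]]] : exists s t, e s t /\
      ((forall z, e s z -> z = t) \/ (forall v, exists a b, [/\ a != b, e v a & e v b])).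
    case: (boolP [exists s, [exists t, e s t && [forall z, e s z ==> (z == t)]]]).
    + case/existsP => s /existsP [t /andP [est /forallP Hz]].
      by exists s, t; split => //; left => z esz; apply/eqP; exact: (implyP (Hz z) esz).
    + move/existsPn => Hn.
      have T1 : 1 < #|T| by lia.
      have [s0 _] : exists s0 : T, true.
        by case/card_gt0P: (ltnW T1) => x _; exists x.
      case: (nbr conn T1 s0) => t0 est0.
      exists s0, t0; split => //; right => v.
      case: (nbr conn T1 v) => a ea; move/existsPn: (Hn v) => /(_ a).
      rewrite ea /= => /forallPn [b]; rewrite negb_imply => /andP [eb nba].
      by exists b, a; split.
  case: (Hcase) => [Hp | Hc].
  + right; exists #|T|; split => //.
    exact: (struct_path conn esym eirr dg est Hcase T3 Hp).
  + have Hcyc := struct_cycle conn esym eirr dg est Hcase T3 Hc.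
    case: (boolP (odd #|T|)) => On.
    * by left; exists #|T|.
    * by exfalso; apply: (even_cycle_not_pair Hcyc On).
- have Hres : forall n (f : 'I_n -> T) (h0 : 0 < n) (h1 : 1 < n) (h2 : 2 < n),
      bijective f -> pair_res e ->
      e (f (Ordinal h1)) (f (Ordinal h0)) ->
      e (f (Ordinal h1)) (f (Ordinal h2)) -> res_wt_is e 3.
    move=> n f h0 h1 n3 fb Hp e10 e12.
    have Tn : #|T| = n by rewrite -(bij_eq_card fb) card_ord.
    split => //; split; first exact: pair_all3.
    move=> r /andP [r0 r3].
    have [->|->] : r = 1 \/ r = 2 by lia.
    + by apply: not_all1; lia.
    + apply: (not_all2 esym eirr _ e10 e12).
      by apply/eqP => /(bij_inj fb) /(congr1 val).
  case=> [[n [On Hc]] | [n [n3 Hp]]].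
  + have Hpr := odd_cycle_pair Hc On.
    case: Hc => n3 [f [fb Hf]].
    have h0 : 0 < n by lia.
    have h1 : 1 < n by lia.
    apply: (Hres n f h0 h1 n3 fb Hpr).
    * by rewrite Hf /= add0n (modn_small h1) eqxx orbT.
    * by rewrite Hf /= (modn_small n3) eqxx.
  + have Hpr := path_pair Hp.
    case: Hp => f [fb Hf].
    have h0 : 0 < n by lia.
    have h1 : 1 < n by lia.
    apply: (Hres n f h0 h1 n3 fb Hpr).
    * by rewrite Hf.
    * by rewrite Hf.
Qed.
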